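(* Let $X,Y$ be countable discrete metric spaces, $d\in D(X,Y)$, $d'\in D(Y,X)$, and suppose $M_{d'\circ d}(X,X)=M_{d^0}(X,X)$ $(=C^*_u(X))$. Then there exists an almost isometry $f:X\to Y$ such that $d$ and $d_f$ are almost isometric, i.e. $\sup_{x\in X,y\in Y}|d(x,y)-d_f(x,y)|<\infty$.
   Context: $D(X,Y)$: metrics on $X\sqcup Y$ extending $d_X,d_Y$. $(d'\circ d)$ is the function on $X\sqcup X'$ ($X'$ a second copy of $X$) given by $d_X$ on each copy and $(d'\circ d)(x_1,x_2')=\inf_{y\in Y}(d(x_1,y)+d'(y,x_2'))$. For such a function $\rho$, $M_\rho(X,X)$ is the norm closure of bounded operators $T$ on $l^2(X)$ for which there is $L$ with $\langle T\delta_{x_1},\delta_{x_2}\rangle=0$ whenever $\rho(x_1,x_2')\ge L$. $d^0(x_1,x_2')=d_X(x_1,x_2)+1$. An almost isometry $f:X\to Y$ satisfies $d_X(x,x')-C\le d_Y(f(x),f(x'))\le d_X(x,x')+C$ for some $C>0$; $d_f(x,y)=\inf_{\tilde x\in X}(d_X(x,\tilde x)+C/2+d_Y(f(\tilde x),y))$. *)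

(* Defs.v *)
From Stdlib Require Import Reals Lra List ClassicalEpsilon.
Import ListNotations.
Open Scope R_scope.

Definition is_metric {T : Type} (dist : T -> T -> R) : Prop :=
  (forall x y, 0 <= dist x y) /\
  (forall x y, dist x y = 0 <-> x = y) /\
  (forall x y, dist x y = dist y x) /\
  (forall x y z, dist x z <= dist x y + dist y z).

Definition countable (T : Type) : Prop :=
  exists enc : T -> nat, forall a b, enc a = enc b -> a = b.

Definition discrete_metric {T : Type} (dist : T -> T -> R) : Prop :=
  forall x, exists eps, 0 < eps /\ forall y, y <> x -> eps <= dist x y.

Definition countable_discrete_metric_space (T : Type) (dist : T -> T -> R) : Prop :=
  countable T /\ is_metric dist /\ discrete_metric dist.

(* rho in D(X,Y): a metric on X ⊔ Y (= sum type X + Y) extending dX and dY *)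
Definition in_D {X Y : Type} (dX : X -> X -> R) (dY : Y -> Y -> R)
  (rho : (X + Y) -> (X + Y) -> R) : Prop :=
  is_metric rho /\
  (forall x x', rho (inl x) (inl x') = dX x x') /\
  (forall y y', rho (inr y) (inr y') = dY y y').

(* the mixed part d(x,y) of rho in D(X,Y) *)
Definition cross {X Y : Type} (rho : (X + Y) -> (X + Y) -> R) (x : X) (y : Y) : R :=
  rho (inl x) (inr y).

Definition Cx := (R * R)%type.
Definition C0 : Cx := (0, 0).
Definition Cadd (a b : Cx) : Cx := (fst a + fst b, snd a + snd b).
Definition Csub (a b : Cx) : Cx := (fst a - fst b, snd a - snd b).
Definition Cmul (a b : Cx) : Cx :=
  (fst a * fst b - snd a * snd b, fst a * snd b + snd a * fst b).
Definition Cconj (a : Cx) : Cx := (fst a, - snd a).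
Definition Cnorm2 (a : Cx) : R := fst a * fst a + snd a * snd a.
Definition Cabs (a : Cx) : R := sqrt (Cnorm2 a).

Definition Rsum {T : Type} (s : list T) (F : T -> R) : R :=
  fold_right (fun x acc => F x + acc) 0 s.
Definition Csum {T : Type} (s : list T) (F : T -> Cx) : Cx :=
  fold_right (fun x acc => Cadd (F x) acc) C0 s.

(* A (candidate) operator on l^2(X) is given by its matrix
   t x1 x2 = < T delta_{x1}, delta_{x2} >.  A matrix defines a bounded
   operator of norm <= M iff |<T xi, eta>| <= M ||xi|| ||eta|| for all
   finitely supported xi, eta; bounded operators on l^2(X) correspond
   bijectively to such matrices. *)
Definition matrix (X : Type) := X -> X -> Cx.

Definition l2norm {X : Type} (s : list X) (xi : X -> Cx) : R :=
  sqrt (Rsum s (fun x => Cnorm2 (xi x))).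

Definition form {X : Type} (t : matrix X) (s : list X) (xi eta : X -> Cx) : Cx :=
  Csum s (fun x1 => Csum s (fun x2 =>
    Cmul (Cmul (t x1 x2) (xi x1)) (Cconj (eta x2)))).

Definition op_norm_le {X : Type} (t : matrix X) (M : R) : Prop :=
  forall (s : list X) (xi eta : X -> Cx), NoDup s ->
    Cabs (form t s xi eta) <= M * l2norm s xi * l2norm s eta.

Definition bounded_op {X : Type} (t : matrix X) : Prop :=
  exists M, op_norm_le t M.

Definition msub {X : Type} (t t' : matrix X) : matrix X :=
  fun x1 x2 => Csub (t x1 x2) (t' x1 x2).

(* A function rho on X ⊔ X' enters M_rho(X,X) only through the predicate
   "rho(x1, x2') >= L"; we parametrize M by this predicate [rho_ge L x1 x2]. *)
Definition M_rho {X : Type} (rho_ge : R -> X -> X -> Prop) (t : matrix X) : Prop :=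
  bounded_op t /\
  forall eps, 0 < eps ->
    exists t' : matrix X,
      bounded_op t' /\
      (exists L, forall x1 x2, rho_ge L x1 x2 -> t' x1 x2 = C0) /\
      op_norm_le (msub t t') eps.

(* (d' o d)(x1, x2') = inf_y (d(x1,y) + d'(y,x2')) >= L, with inf over empty
   set = +infinity *)
Definition comp_ge {X Y : Type} (d : X -> Y -> R) (d' : Y -> X -> R)
  (L : R) (x1 x2 : X) : Prop :=
  forall y : Y, L <= d x1 y + d' y x2.

(* d^0(x1, x2') = dX(x1,x2) + 1 >= L *)
Definition d0_ge {X : Type} (dX : X -> X -> R) (L : R) (x1 x2 : X) : Prop :=
  L <= dX x1 x2 + 1.

Definition almost_isometry {X Y : Type} (dX : X -> X -> R) (dY : Y -> Y -> R)
  (f : X -> Y) (C : R) : Prop :=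
  0 < C /\
  forall x x', dX x x' - C <= dY (f x) (f x') /\ dY (f x) (f x') <= dX x x' + C.

Definition is_inf (E : R -> Prop) (m : R) : Prop :=
  (forall r, E r -> m <= r) /\ (forall b, (forall r, E r -> b <= r) -> b <= m).

(* infimum of a set of reals (meaningful when E is nonempty and bounded below) *)
Definition Rinf (E : R -> Prop) : R := epsilon (inhabits 0) (fun m => is_inf E m).

Definition d_f {X Y : Type} (dX : X -> X -> R) (dY : Y -> Y -> R)
  (f : X -> Y) (C : R) (x : X) (y : Y) : R :=
  Rinf (fun r => exists xt : X, r = dX x xt + C / 2 + dY (f xt) y).

(* Main.v *)
Require Import Defs.
From Stdlib Require Import Reals Lra List ClassicalEpsilon Classical.
From Coquelicot Require Complex.
Import ListNotations.
Open Scope R_scope.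

Lemma Cabs_Cmod (z : Cx) : Cabs z = Complex.Cmod z.
Proof. unfold Cabs, Cnorm2, Complex.Cmod. f_equal. simpl. ring. Qed.

Lemma Cabs_add a b : Cabs (Cadd a b) <= Cabs a + Cabs b.
Proof. rewrite !Cabs_Cmod. apply (Complex.Cmod_triangle a b). Qed.

Lemma Cabs_mul a b : Cabs (Cmul a b) = Cabs a * Cabs b.
Proof. rewrite !Cabs_Cmod. apply (Complex.Cmod_mult a b). Qed.

Lemma Cabs_conj a : Cabs (Cconj a) = Cabs a.
Proof. rewrite !Cabs_Cmod. apply (Complex.Cmod_conj a). Qed.

Lemma Cabs_ge0 a : 0 <= Cabs a.
Proof. unfold Cabs. apply sqrt_pos. Qed.

Lemma Cnorm2_ge0 a : 0 <= Cnorm2 a.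
Proof. unfold Cnorm2. nra. Qed.

Lemma Cabs_sq a : Cabs a * Cabs a = Cnorm2 a.
Proof. unfold Cabs. apply sqrt_sqrt, Cnorm2_ge0. Qed.

Lemma Cabs_Csum {T} (s : list T) g : Cabs (Csum s g) <= Rsum s (fun x => Cabs (g x)).
Proof.
  induction s as [|a s IH]; simpl.
  - unfold Cabs, Cnorm2, C0; simpl. replace (0*0+0*0) with 0 by ring. rewrite sqrt_0. lra.
  - eapply Rle_trans. apply Cabs_add. lra.
Qed.

Lemma Rsum_ext {T} (s : list T) F G : (forall x, In x s -> F x = G x) -> Rsum s F = Rsum s G.
Proof.
  induction s as [|a s IH]; simpl; intros H; auto.
  rewrite H by auto. rewrite IH; auto.
Qed.

Lemma Rsum_le {T} (s : list T) F G : (forall x, In x s -> F x <= G x) -> Rsum s F <= Rsum s G.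
Proof.
  induction s as [|a s IH]; simpl; intros H. lra.
  specialize (IH (fun x h => H x (or_intror h))). specialize (H a (or_introl eq_refl)). lra.
Qed.

Lemma Rsum_ge0 {T} (s : list T) F : (forall x, 0 <= F x) -> 0 <= Rsum s F.
Proof. induction s; simpl; intros H. lra. pose proof (H a). specialize (IHs H). lra. Qed.

Lemma Rsum_zero {T} (s : list T) F : (forall x, In x s -> F x = 0) -> Rsum s F = 0.
Proof. intros H. rewrite (Rsum_ext s F (fun _ => 0)) by auto. clear H. induction s; simpl; lra. Qed.

Definition dec {X} (a b : X) := excluded_middle_informative (a = b).

Lemma Rsum_delta {T} (s : list T) (x : T) (c : T -> R) :
  NoDup s -> In x s -> Rsum s (fun y => if dec x y then c y else 0) = c x.
Proof.
  induction s as [|a s IH]; simpl; intros Hn Hi. contradiction.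
  inversion Hn; subst.
  destruct (dec x a) as [e|ne].
  - subst. rewrite Rsum_zero. ring.
    intros y Hy. destruct (dec a y); auto. subst. contradiction.
  - destruct Hi as [e|Hi]. subst; contradiction. rewrite IH; auto. ring.
Qed.

Lemma CS {T} (s : list T) (u v : T -> R) : (forall x, 0 <= u x) -> (forall x, 0 <= v x) ->
  Rsum s (fun x => u x * v x) <= sqrt (Rsum s (fun x => u x * u x)) * sqrt (Rsum s (fun x => v x * v x)).
Proof.
  intros Hu Hv. induction s as [|a s IH]; simpl.
  - rewrite sqrt_0. lra.
  - set (A := Rsum s (fun x => u x * u x)) in *.
    set (B := Rsum s (fun x => v x * v x)) in *.
    assert (HA : 0 <= A) by (apply Rsum_ge0; intros; specialize (Hu x); nra).
    assert (HB : 0 <= B) by (apply Rsum_ge0; intros; specialize (Hv x); nra).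
    pose proof (sqrt_pos A). pose proof (sqrt_pos B).
    pose proof (sqrt_sqrt A HA). pose proof (sqrt_sqrt B HB).
    specialize (Hu a). specialize (Hv a).
    rewrite <- sqrt_mult by nra.
    apply Rle_trans with (u a * v a + sqrt A * sqrt B). lra.
    apply Rsqr_incr_0_var. 2: apply sqrt_pos.
    rewrite Rsqr_sqrt by nra. unfold Rsqr.
    set (a1 := sqrt A) in *. set (b1 := sqrt B) in *.
    rewrite <- H1, <- H2.
    pose proof (Rle_0_sqr (u a * b1 - v a * a1)). unfold Rsqr in *. nra.
Qed.

Definition Imat {X} : matrix X := fun x1 x2 => if dec x1 x2 then (1, 0) else C0.

Lemma form_bound {X} (t : matrix X) s xi eta :
  Cabs (form t s xi eta) <= Rsum s (fun x1 => Rsum s (fun x2 =>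
     Cabs (t x1 x2) * Cabs (xi x1) * Cabs (eta x2))).
Proof.
  unfold form. eapply Rle_trans. apply Cabs_Csum. apply Rsum_le. intros x1 _.
  eapply Rle_trans. apply Cabs_Csum. apply Rsum_le. intros x2 _.
  rewrite !Cabs_mul, Cabs_conj. lra.
Qed.

Lemma Cabs_C0 : Cabs C0 = 0.
Proof. unfold Cabs, Cnorm2, C0; simpl. replace (0*0+0*0) with 0 by ring. apply sqrt_0. Qed.

Lemma Cabs_one : Cabs (1,0) = 1.
Proof. unfold Cabs, Cnorm2; simpl. replace (1*1+0*0) with 1 by ring. apply sqrt_1. Qed.

Lemma l2_ge0 {X} (s : list X) xi : 0 <= l2norm s xi.
Proof. apply sqrt_pos. Qed.

Lemma Imat_bounded {X} : @op_norm_le X Imat 1.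
Proof.
  intros s xi eta Hn. eapply Rle_trans. apply form_bound.
  rewrite (Rsum_ext s _ (fun x1 => Cabs (xi x1) * Cabs (eta x1))).
  - rewrite Rmult_1_l. unfold l2norm.
    rewrite (Rsum_ext s (fun x => Cnorm2 (xi x)) (fun x => Cabs (xi x) * Cabs (xi x))).
    rewrite (Rsum_ext s (fun x => Cnorm2 (eta x)) (fun x => Cabs (eta x) * Cabs (eta x))).
    apply CS; intros; apply Cabs_ge0.
    intros; symmetry; apply Cabs_sq. intros; symmetry; apply Cabs_sq.
  - intros x1 Hx1.
    rewrite (Rsum_ext s _ (fun x2 => if dec x1 x2 then Cabs (xi x1) * Cabs (eta x2) else 0)).
    apply (Rsum_delta s x1 (fun x2 => Cabs (xi x1) * Cabs (eta x2))); auto.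
    intros x2 _. unfold Imat. destruct (dec x1 x2). rewrite Cabs_one; ring. rewrite Cabs_C0; ring.
Qed.

Lemma zero_norm {X} (t : matrix X) eps : 0 <= eps -> (forall a b, t a b = C0) -> op_norm_le t eps.
Proof.
  intros He Ht s xi eta _. eapply Rle_trans. apply form_bound.
  rewrite Rsum_zero. pose proof (l2_ge0 s xi). pose proof (l2_ge0 s eta). 
  apply Rmult_le_pos; auto. apply Rmult_le_pos; auto.
  intros. apply Rsum_zero. intros. rewrite Ht, Cabs_C0. ring.
Qed.

Lemma form_single {X} (m : matrix X) x : form m [x] (fun _ => (1,0)) (fun _ => (1,0)) = m x x.
Proof. unfold form, Csum, Cadd, Cmul, Cconj, C0. simpl. destruct (m x x) as [a b]. simpl. f_equal; ring. Qed.

Lemma l2_single {X} (x : X) : l2norm [x] (fun _ => (1,0)) = 1.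
Proof. unfold l2norm, Rsum, Cnorm2. simpl. replace (1*1+0*0+0) with 1 by ring. apply sqrt_1. Qed.

Lemma diag_nonzero {X} (t' : matrix X) x : op_norm_le (msub Imat t') (1/2) -> t' x x <> C0.
Proof.
  intros H E. specialize (H [x] (fun _ => (1,0)) (fun _ => (1,0))).
  rewrite form_single, l2_single in H.
  assert (NoDup [x]) by (constructor; [simpl; tauto| constructor]).
  specialize (H H0). unfold msub, Imat in H. rewrite E in H.
  destruct (dec x x) as [_|n]; [|congruence].
  unfold Csub, C0 in H; simpl in H. replace (1-0, 0-0) with ((1,0) : Cx) in H by (f_equal; ring).
  rewrite Cabs_one in H. lra.
Qed.

Lemma glb_exists (E : R -> Prop) : (exists r, E r) -> (forall r, E r -> 0 <= r) -> exists m, is_inf E m.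
Proof.
  intros [r0 Hr0] Hlb.
  destruct (completeness (fun r => E (- r))) as [m [Hub Hl]].
  - exists 0. intros r Hr. specialize (Hlb _ Hr). lra.
  - exists (- r0). rewrite Ropp_involutive. auto.
  - exists (- m). split.
    + intros r Hr. assert (- r <= m) by (apply Hub; rewrite Ropp_involutive; auto). lra.
    + intros b Hb. assert (m <= - b). apply Hl. intros r Hr. specialize (Hb _ Hr). lra. lra.
Qed.

Lemma Rinf_spec (E : R -> Prop) : (exists m, is_inf E m) -> is_inf E (Rinf E).
Proof. intros H. unfold Rinf. apply epsilon_spec. exact H. Qed.

Theorem theorem4p2 (X Y : Type) (dX : X -> X -> R) (dY : Y -> Y -> R)
  (rho : (X + Y) -> (X + Y) -> R) (rho' : (Y + X) -> (Y + X) -> R) :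
  countable_discrete_metric_space X dX ->
  countable_discrete_metric_space Y dY ->
  in_D dX dY rho ->
  in_D dY dX rho' ->
  (forall t : matrix X,
     M_rho (comp_ge (cross rho) (cross rho')) t <-> M_rho (d0_ge dX) t) ->
  exists (f : X -> Y) (C : R),
    almost_isometry dX dY f C /\
    exists K : R, forall (x : X) (y : Y),
      Rabs (cross rho x y - d_f dX dY f C x y) <= K.
Proof.
  intros _ _ [[Rp [Rz [Rs Rt]]] [RX RY]] [[Rp' _] _] Heq.
  assert (HI : M_rho (d0_ge dX) Imat).
  { split. exists 1. apply Imat_bounded.
    intros eps Heps. exists Imat. split. exists 1. apply Imat_bounded. split.
    - exists 2. intros x1 x2 Hd. unfold Imat. destruct (dec x1 x2) as [e|]; auto.
      subst. unfold d0_ge in Hd. rewrite <- RX in Hd. assert (rho (inl x2) (inl x2) = 0) by (apply Rz; auto). lra.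
    - apply zero_norm. lra. intros. unfold msub, Csub, C0. f_equal; ring. }
  apply Heq in HI. destruct HI as [_ HI].
  destruct (HI (1/2)) as [t' [_ [[L HL] Hn]]]. lra.
  assert (Hy : forall x, exists y, cross rho x y < L).
  { intros x. pose proof (diag_nonzero t' x Hn) as Hnz.
    destruct (classic (comp_ge (cross rho) (cross rho') L x x)) as [c|c].
    - exfalso. apply Hnz. apply HL. auto.
    - unfold comp_ge in c. apply not_all_ex_not in c. destruct c as [y Hy]. exists y.
      apply Rnot_le_lt in Hy. pose proof (Rp' (inl y) (inr x)). unfold cross in *. lra. }
  set (f := fun x => proj1_sig (constructive_indefinite_description _ (Hy x))).
  assert (Hf : forall x, rho (inl x) (inr (f x)) < L).
  { intros x. unfold f. destruct (constructive_indefinite_description _ (Hy x)) as [y0 c]. simpl. exact c. }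
  set (L0 := Rmax L 1).
  assert (HL0 : L <= L0) by apply Rmax_l. assert (HL1 : 1 <= L0) by apply Rmax_r.
  exists f, (2 * L0). split.
  - split. lra. intros x x'. rewrite <- RX, <- RY.
    pose proof (Hf x). pose proof (Hf x').
    pose proof (Rt (inl x) (inr (f x)) (inl x')). pose proof (Rt (inl x) (inl x') (inr (f x'))).
    pose proof (Rt (inr (f x)) (inl x) (inr (f x'))).
    pose proof (Rt (inl x) (inr (f x)) (inr (f x'))). pose proof (Rt (inr (f x)) (inr (f x')) (inl x')).
    pose proof (Rs (inr (f x)) (inl x)). pose proof (Rs (inr (f x')) (inl x')).
    split; lra.
  - exists (3 * L0). intros x y.
    set (E := fun r => exists xt : X, r = dX x xt + 2 * L0 / 2 + dY (f xt) y).
    assert (Hinf : is_inf E (d_f dX dY f (2 * L0) x y)).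
    { unfold d_f. apply Rinf_spec. apply glb_exists.
      exists (dX x x + 2 * L0 / 2 + dY (f x) y). exists x. auto.
      intros r [xt ->]. rewrite <- RX, <- RY. pose proof (Rp (inl x) (inl xt)). pose proof (Rp (inr (f xt)) (inr y)). lra. }
    destruct Hinf as [H1 H2].
    assert (U : d_f dX dY f (2 * L0) x y <= cross rho x y + 2 * L0).
    { eapply Rle_trans. apply H1. exists x. reflexivity. rewrite <- RX, <- RY.
      assert (rho (inl x) (inl x) = 0) by (apply Rz; auto).
      pose proof (Rt (inr (f x)) (inl x) (inr y)). pose proof (Rs (inr (f x)) (inl x)).
      pose proof (Hf x). unfold cross. lra. }
    assert (D : cross rho x y - L0 <= d_f dX dY f (2 * L0) x y).
    { apply H2. intros r [xt ->]. rewrite <- RX, <- RY.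
      pose proof (Rt (inl x) (inl xt) (inr y)). pose proof (Rt (inl xt) (inr (f xt)) (inr y)).
      pose proof (Hf xt). unfold cross. lra. }
    apply Rabs_le. lra.
Qed.
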